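(* Fix a partition $\Pi$ of $V(G)$ into sets of sizes divisible by $r$. Suppose each $f_v$ is $K_v$-Lipschitz and let $K_{\max}=\max_vK_v$. If $\mathcal P$ is sampled uniformly from the set of partitions of $V(G)$ into $n$ sets of size $r$ each contained in a single part of $\Pi$, and $T=T_{\vec B,\mathcal P}$ with $\vec B$ independent of $\mathcal P$, then $$\mathbb E_{\mathcal P}\Big[\big(\mathbb E_{\vec B}(\xi\mid\mathcal P)\big)^2\Big]\le\frac{2K_{\max}^2|\Pi|}{nr\,d_{\min}}.$$
   Context: Let $n,p,q$ be positive integers, $r=p+q$, $G$ a finite simple graph with $|V(G)|=rn$ and no isolated vertices; $\mathcal N(v)$, $d(v)$, $d_{\min}$ neighbor set, degree, minimum degree. For each $v$, $f_v:2^{\mathcal N(v)}\to\mathbb R$ with $f_v(\emptyset)=0$. $\sigma_T(v)=q$ if $v\in T$, $-p$ otherwise; for $|T|=pn$, $\xi=\frac1{pqn}\sum_v\sigma_T(v)f_v(T\cap\mathcal N(v))$. $f_v$ is $K_v$-Lipschitz ($K_v>0$) if $|f_v(A)-f_v(A')|\le K_v|A\triangle A'|/d(v)$ for all $A,A'\subseteq\mathcal N(v)$. Restricted randomization: for $\mathcal P=(S_1,\dots,S_n)$, $S_i=\{w_i^1,\dots,w_i^r\}$, $B_i$ i.i.d. uniform $p$-subsets of $\{1,\dots,r\}$, $T_{\vec B,\mathcal P}=\{w_i^j:j\in B_i\}$. *)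

(* Defs.v *)
From HB Require Import structures.
From mathcomp Require Import all_boot all_order all_algebra.
Set Implicit Arguments. Unset Strict Implicit. Unset Printing Implicit Defensive.
Import Order.TTheory GRing.Theory Num.Theory.
Local Open Scope ring_scope.

Section Defs.
Variable V : finType.

Definition simple_graph (e : rel V) : Prop :=
  (forall u v, e u v = e v u) /\ (forall v, ~~ e v v).

Definition nbhd (e : rel V) (v : V) : {set V} := [set u | e v u].
Definition deg (e : rel V) (v : V) : nat := #|nbhd e v|.
Definition dmin (e : rel V) : nat := \big[minn/#|V|]_(v : V) deg e v.

Variable R : realFieldType.

Definition Kmax (K : V -> R) : R := \big[Num.max/0]_(v : V) K v.

Definition symdiff (A B : {set V}) : {set V} := (A :\: B) :|: (B :\: A).

Definition lipschitz (e : rel V) (f : V -> {set V} -> R) (K : V -> R) : Prop :=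
  forall v (A A' : {set V}), A \subset nbhd e v -> A' \subset nbhd e v ->
    `|f v A - f v A'| <= K v * (#|symdiff A A'|)%:R / (deg e v)%:R.

Definition sigmaT (p q : nat) (T : {set V}) (v : V) : R :=
  if v \in T then q%:R else - p%:R.

Definition xi (p q n : nat) (e : rel V) (f : V -> {set V} -> R) (T : {set V}) : R :=
  (p * q * n)%:R^-1 * \sum_(v : V) sigmaT p q T v * f v (T :&: nbhd e v).

(* A partition P = (S_1,...,S_n), S_i = {w_i^1,...,w_i^r}, is encoded by the
   labelling w : 'I_n * 'I_r -> V, (i,j) |-> w_i^j (injective, hence a bijection
   since |V| = rn), such that each S_i lies in one part of Pi. *)
Definition valid_labelling (n r : nat) (Pi : {set {set V}})
    (w : {ffun 'I_n * 'I_r -> V}) : bool :=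
  injectiveb w && [forall i : 'I_n, exists B in Pi, forall j : 'I_r, w (i, j) \in B].

Definition valid_B (n r p : nat) (B : {ffun 'I_n -> {set 'I_r}}) : bool :=
  [forall i, #|B i| == p].

Definition T_of (n r : nat) (w : {ffun 'I_n * 'I_r -> V})
    (B : {ffun 'I_n -> {set 'I_r}}) : {set V} :=
  [set x | [exists i : 'I_n, exists j : 'I_r, (j \in B i) && (w (i, j) == x)]].

(* E_B(xi | P): B uniform over the product of uniform p-subsets *)
Definition condExp (p q n : nat) (e : rel V) (f : V -> {set V} -> R)
    (w : {ffun 'I_n * 'I_(p + q) -> V}) : R :=
  (\sum_(B : {ffun 'I_n -> {set 'I_(p + q)}} | @valid_B n (p + q) p B)
      @xi p q n e f (T_of w B))
  / (#|[pred B : {ffun 'I_n -> {set 'I_(p + q)}} | @valid_B n (p + q) p B]|)%:R.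

(* E_P[(E_B(xi|P))^2], P uniform among valid partitions *)
Definition meanSq (p q n : nat) (e : rel V) (f : V -> {set V} -> R)
    (Pi : {set {set V}}) : R :=
  (\sum_(w : {ffun 'I_n * 'I_(p + q) -> V} | @valid_labelling n (p + q) Pi w)
      (@condExp p q n e f w) ^+ 2)
  / (#|[pred w : {ffun 'I_n * 'I_(p + q) -> V} | @valid_labelling n (p + q) Pi w]|)%:R.

End Defs.

(* Main.v *)
Require Import Defs.
From HB Require Import structures.
From mathcomp Require Import all_boot all_order all_algebra all_fingroup ring lra zify.
Import Order.TTheory GRing.Theory Num.Theory.
Local Open Scope ring_scope.
Set Implicit Arguments. Unset Strict Implicit. Unset Printing Implicit Defensive.

Lemma sum_bij (R : realFieldType) (T : finType) (P P' : pred T) (h h' : T -> T) (F : T -> R) :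
 (forall x, P x -> P' (h x)) -> (forall y, P' y -> P (h' y)) ->
 (forall x, P x -> h' (h x) = x) -> (forall y, P' y -> h (h' y) = y) ->
 \sum_(x | P x) F (h x) = \sum_(y | P' y) F y.
Proof.
move=> PP P'P hK h'K; rewrite [RHS](reindex_onto h h' h'K); apply: eq_bigl => x.
apply/idP/andP.
- move=> Px; split; [exact: PP | apply/eqP; exact: hK].
- by case=> P'hx /eqP <-; apply: P'P.
Qed.

Section BSide.
Variables (n r : nat).
Implicit Types (B : {ffun 'I_n -> {set 'I_r}}).

Definition upd B i (S : {set 'I_r}) : {ffun 'I_n -> {set 'I_r}} :=
  [ffun k => if k == i then S else B k].
Definition phi i (j0 j : 'I_r) B := upd B i (j |: (B i :\ j0)).

Lemma validP p B : reflect (forall k, #|B k| = p) (valid_B p B).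
Proof. apply: (iffP forallP) => H k; [exact/eqP/H | exact/eqP/H]. Qed.

Lemma phi_ok p i (j0 j : 'I_r) B : j != j0 ->
  [&& valid_B p B, j0 \in B i & j \notin B i] ->
  [&& valid_B p (phi i j0 j B), j \in (phi i j0 j B) i & j0 \notin (phi i j0 j B) i].
Proof.
move=> nj /and3P[/validP vB j0B jB]; rewrite /phi /upd !ffunE eqxx !inE eqxx /=.
rewrite eq_sym (negbTE nj) eqxx /= andbT.
apply/validP => k; rewrite ffunE; case: eqP => // _.
rewrite cardsU1 !inE (negbTE nj) /= jB.
move: (vB i); rewrite (cardsD1 j0) j0B => <-; by rewrite add1n.
Qed.

Lemma phiK i (j0 j : 'I_r) B : j != j0 -> j0 \in B i -> j \notin B i ->
  phi i j j0 (phi i j0 j B) = B.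
Proof.
move=> nj j0B jB; apply/ffunP => k; rewrite /phi /upd !ffunE eqxx.
case: eqP => [->|//]; apply/setP => y; rewrite !inE.
case: (eqVneq y j0) => [->|ny0] //=; case: (eqVneq y j) => [->|nyj] //=.
by rewrite (negbTE jB).
Qed.

End BSide.

Section Ident.
Variables (R : realFieldType) (n p q : nat).
Local Notation r := (p + q)%N.
Implicit Types (B : {ffun 'I_n -> {set 'I_r}}).

Lemma count_notin B i : valid_B p B -> #|[pred j | j \notin B i]| = q.
Proof.
move/validP => vB; have := cardsC (B i); rewrite vB card_ord.
have -> : #|~: B i| = #|[pred j | j \notin B i]| by apply: eq_card => j; rewrite !inE.
by move/eqP; rewrite eqn_add2l => /eqP.
Qed.

Lemma count_in B i : valid_B p B -> #|[pred j | j \in B i]| = p.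
Proof. move/validP => vB; rewrite -[RHS](vB i); by apply: eq_card. Qed.

Lemma sigma_identity i j0 (g : {ffun 'I_n -> {set 'I_r}} -> R) :
 \sum_(B | valid_B p B) (if j0 \in B i then q%:R else - p%:R) * g B =
 \sum_j \sum_(B | [&& valid_B p B, j0 \in B i & j \notin B i]) (g B - g (phi i j0 j B)).
Proof.
rewrite (bigID (fun B => j0 \in B i)) /=.
under [RHS]eq_bigr do rewrite sumrB.
rewrite sumrB.
have -> : \sum_j \sum_(B | [&& valid_B p B, j0 \in B i & j \notin B i]) g B =
   \sum_(B | valid_B p B && (j0 \in B i)) q%:R * g B.
  transitivity (\sum_j \sum_B (if [&& valid_B p B, j0 \in B i & j \notin B i] then g B else 0)).
    by apply: eq_bigr => j _; rewrite big_mkcond.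
  rewrite exchange_big [RHS]big_mkcond; apply: eq_bigr => B _.
  case: (boolP (valid_B p B)) => vB /=; last by rewrite big1.
  case: (boolP (j0 \in B i)) => j0B /=; last by rewrite big1.
  by rewrite -big_mkcond sumr_const count_notin // mulr_natl.
have -> : \sum_j \sum_(B | [&& valid_B p B, j0 \in B i & j \notin B i]) g (phi i j0 j B) =
   \sum_(B | valid_B p B && ~~ (j0 \in B i)) p%:R * g B.
  transitivity (\sum_j \sum_(B | [&& valid_B p B, j \in B i & j0 \notin B i]) g B).
    apply: eq_bigr => j _.
    case: (eqVneq j j0) => [->|nj].
      by rewrite !big1 // => B /and3P[_ -> ].
    apply: (sum_bij (h' := phi i j j0)).
    - by move=> B HB; apply: phi_ok.
    - by move=> B HB; apply: phi_ok => //; rewrite eq_sym.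
    - by move=> B /and3P[_ ? ?]; apply: phiK.
    - by move=> B /and3P[_ ? ?]; apply: phiK => //; rewrite eq_sym.
  transitivity (\sum_j \sum_B (if [&& valid_B p B, j \in B i & j0 \notin B i] then g B else 0)).
    by apply: eq_bigr => j _; rewrite big_mkcond.
  rewrite exchange_big [RHS]big_mkcond; apply: eq_bigr => B _.
  case: (boolP (valid_B p B)) => vB /=; last by rewrite big1.
  case: (boolP (j0 \in B i)) => j0B /=.
    by rewrite big1 // => j _; rewrite andbF.
  rewrite (eq_bigr (fun j => if j \in B i then g B else 0)); last by move=> j _; rewrite andbT.
  by rewrite -big_mkcond sumr_const count_in // mulr_natl.
congr (_ + _).
  by apply: eq_bigr => B /andP[_ ->].
rewrite -sumrN; apply: eq_bigr => B /andP[_ /negbTE ->]; by rewrite mulNr.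
Qed.

End Ident.

Section Count.
Variables (R : realFieldType) (n p q : nat).
Local Notation r := (p + q)%N.
Local Notation BT := {ffun 'I_n -> {set 'I_r}}.
Implicit Types (B : BT).

Definition NB : R := \sum_(B : BT | valid_B p B) 1.
Definition Ncnt i (j0 j : 'I_r) : R := \sum_(B : BT | [&& valid_B p B, j0 \in B i & j \notin B i]) 1.
Definition Mcnt i (j0 : 'I_r) : R := \sum_(B : BT | valid_B p B && (j0 \in B i)) 1.

Lemma Mcnt_eq i j0 : r%:R * Mcnt i j0 = p%:R * NB.
Proof.
have E : \sum_(j : 'I_r) \sum_(B : BT | [&& valid_B p B, j0 \in B i & j \notin B i]) (1 - 1 : R) = 0.
  by rewrite big1 // => j _; rewrite big1 // => B _; rewrite subrr.
have := @sigma_identity R n p q i j0 (fun _ => 1); rewrite /= E.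
rewrite (bigID (fun B => j0 \in B i)) /=.
rewrite (eq_bigr (fun _ => q%:R * 1)); last by move=> B /andP[_ ->].
rewrite [X in _ + X](eq_bigr (fun _ => - p%:R * 1)); last by move=> B /andP[_ /negbTE ->].
rewrite -!mulr_sumr => H.
rewrite /NB (bigID (fun B : BT => j0 \in B i)) /= natrD /Mcnt.
move: H; set a := \sum_(B : BT | _ && (j0 \in B i)) 1; set b := \sum_(B : BT | _ && ~~ _) 1.
move=> H; rewrite mulrDl mulrDr; rewrite mulNr in H; lra.
Qed.

Lemma Ncnt_j0 i j0 : Ncnt i j0 j0 = 0.
Proof. by rewrite /Ncnt big1 // => B /and3P[_ ->]. Qed.

Lemma Ncnt_sum i j0 : \sum_j Ncnt i j0 j = q%:R * Mcnt i j0.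
Proof.
rewrite /Ncnt /Mcnt.
transitivity (\sum_j \sum_(B : BT) (if [&& valid_B p B, j0 \in B i & j \notin B i] then 1 else 0 : R)).
  by apply: eq_bigr => j _; rewrite big_mkcond.
rewrite exchange_big mulr_sumr [RHS]big_mkcond; apply: eq_bigr => B _.
case: (boolP (valid_B p B)) => vB /=; last by rewrite big1 // mulr0.
case: (boolP (j0 \in B i)) => j0B /=; last by rewrite big1 // mulr0.
by rewrite -big_mkcond sumr_const count_notin // mulr1.
Qed.

Definition tau i (j j' : 'I_r) B := upd B i (tperm j j' @^-1: B i).

Lemma tauK i j j' B : tau i j j' (tau i j j' B) = B.
Proof.
apply/ffunP => k; rewrite /tau /upd !ffunE eqxx; case: eqP => [->|//].
by apply/setP => y; rewrite !inE tpermK.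
Qed.

Lemma tau_ok i (j0 j j' : 'I_r) B : j != j0 -> j' != j0 ->
  [&& valid_B p B, j0 \in B i & j \notin B i] ->
  [&& valid_B p (tau i j j' B), j0 \in (tau i j j' B) i & j' \notin (tau i j j' B) i].
Proof.
move=> nj nj' /and3P[/validP vB j0B jB]; rewrite /tau /upd !ffunE eqxx !inE tpermR jB.
rewrite (tpermD nj nj') j0B /= andbT.
apply/validP => k; rewrite ffunE; case: eqP => [_|_]; last by rewrite vB.
by rewrite card_preimset //; apply: perm_inj.
Qed.

Lemma tauC i (j j' : 'I_r) B : tau i j j' B = tau i j' j B.
Proof. by rewrite /tau tpermC. Qed.

Lemma Ncnt_sym i (j0 j j' : 'I_r) : j != j0 -> j' != j0 -> Ncnt i j0 j = Ncnt i j0 j'.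
Proof.
move=> nj nj'; rewrite /Ncnt.
apply: (@sum_bij R BT _ _ (tau i j j') (tau i j j') (fun _ => 1)).
- by move=> B; apply: tau_ok.
- by move=> B H; rewrite tauC; apply: tau_ok.
- by move=> B _; apply: tauK.
- by move=> B _; apply: tauK.
Qed.

Lemma Ncnt_val i (j0 j : 'I_r) : j != j0 ->
  Ncnt i j0 j * (r * r.-1)%:R = (p * q)%:R * NB.
Proof.
move=> nj.
have S : \sum_(j' | j' != j0) Ncnt i j0 j' = r.-1%:R * Ncnt i j0 j.
  rewrite (eq_bigr (fun _ => Ncnt i j0 j)); last by move=> j' nj'; rewrite (Ncnt_sym i nj' nj).
  by rewrite sumr_const cardC1 card_ord mulr_natl.
have := Ncnt_sum i j0; rewrite (bigD1 j0) //= Ncnt_j0 add0r S => H.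
have H2 := Mcnt_eq i j0.
rewrite !natrM.
have -> : Ncnt i j0 j * (r%:R * r.-1%:R) = r%:R * (r.-1%:R * Ncnt i j0 j) by ring.
by rewrite H mulrA [r%:R * q%:R]mulrC -!mulrA H2 mulrCA.
Qed.
End Count.

Section PosBound.
Variables (V : finType) (R : realFieldType) (n p q : nat) (e : rel V)
  (f : V -> {set V} -> R) (K : V -> R).
Local Notation r := (p + q)%N.
Local Notation BT := {ffun 'I_n -> {set 'I_r}}.
Variable w : {ffun 'I_n * 'I_r -> V}.
Hypothesis winj : injective w.
Hypothesis irr : forall v, ~~ e v v.
Hypothesis lip : lipschitz e f K.
Hypothesis Kpos : forall v, 0 < K v.

Lemma memT_ex' (B : BT) x : [exists i0, exists j1, (j1 \in B i0) && (w (i0, j1) == x)] -> exists k l, x = w (k, l) /\ l \in B k.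
Proof.
by move=> /existsP[k /existsP[l /andP[lB /eqP <-]]]; exists k, l.
Qed.

Lemma memT_ex (B : BT) x : x \in T_of w B -> exists k l, x = w (k, l) /\ l \in B k.
Proof. by rewrite inE => /memT_ex'. Qed.

Lemma memT (B : BT) k l : (w (k, l) \in T_of w B) = (l \in B k).
Proof.
apply/idP/idP.
- by case/memT_ex => k' [l' [/winj [-> ->] ?]].
- by move=> lB; rewrite inE; apply/existsP; exists k; apply/existsP; exists l; rewrite lB eqxx.
Qed.

Lemma memT' (B : BT) k l : [exists i0, exists j1, (j1 \in B i0) && (w (i0, j1) == w (k, l))] = (l \in B k).
Proof. by have := memT B k l; rewrite inE. Qed.

Lemma card_set1b (a : V) (b : bool) : #|[set x | (x == a) && b]| = b.
Proof.
case: b.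
- have -> : [set x | (x == a) && true] = [set a] by apply/setP => x; rewrite !inE andbT.
  by rewrite cards1.
- have -> : [set x | (x == a) && false] = set0 by apply/setP => x; rewrite !inE andbF.
  by rewrite cards0.
Qed.

Lemma symdiff_bound (B : BT) i (j0 j : 'I_r) : j0 \in B i -> j \notin B i ->
  (#|symdiff (T_of w B :&: nbhd e (w (i, j0)))
             (T_of w (phi i j0 j B) :&: nbhd e (w (i, j0)))| <= e (w (i, j0)) (w (i, j)))%N.
Proof.
move=> j0B jB; rewrite -(card_set1b (w (i, j))); apply: subset_leq_card; apply/subsetP => x.
rewrite /symdiff !inE => /orP[] /andP[xT'] /andP[xT xN].
- move: xT => /memT_ex'[k [l [xkl lB]]]; subst x.
  move: xT'; rewrite xN andbT memT' /phi /upd ffunE.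
  case: eqP => [ki|]; last by rewrite lB.
  subst k; rewrite !inE lB andbT negb_or => /andP[_]; rewrite negbK => /eqP lj0.
  by subst l; move: xN; rewrite (negbTE (irr _)).
- move: xT => /memT_ex'[k [l [xkl lB]]]; subst x.
  move: xT'; rewrite xN andbT memT'.
  move: lB; rewrite /phi /upd ffunE.
  case: eqP => [ki|]; last by move=> _ ->.
  subst k; rewrite !inE => /orP[/eqP lj|/andP[_ ->]] // _.
  by subst l; rewrite eqxx.
Qed.

Lemma pos_bound i j0 :
 `|\sum_(B : BT | valid_B p B) sigmaT R p q (T_of w B) (w (i, j0)) *
       f (w (i, j0)) (T_of w B :&: nbhd e (w (i, j0)))|
  <= (p * q)%:R / (r * r.-1)%:R * NB R n p q * (K (w (i, j0)) / (deg e (w (i, j0)))%:R)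
       * \sum_j (e (w (i, j0)) (w (i, j)))%:R.
Proof.
set v := w (i, j0).
set g := fun B : BT => f v (T_of w B :&: nbhd e v).
set Kd := K v / (deg e v)%:R.
have Kd0 : 0 <= Kd by rewrite divr_ge0 // ltW.
have -> : \sum_(B : BT | valid_B p B) sigmaT R p q (T_of w B) v * f v (T_of w B :&: nbhd e v)
   = \sum_(B : BT | valid_B p B) (if j0 \in B i then q%:R else - p%:R) * g B.
  by apply: eq_bigr => B _; rewrite /sigmaT /v memT.
rewrite sigma_identity mulr_sumr.
apply: le_trans (ler_norm_sum _ _ _) _; apply: ler_sum => j _.
apply: (@le_trans _ _ (\sum_(B : BT | [&& valid_B p B, j0 \in B i & j \notin B i])
                            Kd * (e v (w (i, j)))%:R)).
  apply: le_trans (ler_norm_sum _ _ _) _; apply: ler_sum => B /and3P[vB j0B jB].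
  apply: le_trans (lip (subsetIr _ _) (subsetIr _ _)) _.
  rewrite mulrAC -/Kd; apply: ler_wpM2l => //; rewrite ler_nat.
  exact: symdiff_bound.
have -> : \sum_(B : BT | [&& valid_B p B, j0 \in B i & j \notin B i]) Kd * (e v (w (i, j)))%:R
   = Ncnt R i j0 j * (Kd * (e v (w (i, j)))%:R).
  by rewrite /Ncnt mulr_suml; apply: eq_bigr => B _; rewrite mul1r.
case: (eqVneq j j0) => [->|nj].
  by rewrite /v (negbTE (irr _)) !mulr0.
have H := Ncnt_val R i nj.
have Dnz : ((r * r.-1)%:R : R) != 0.
  rewrite pnatr_eq0 -lt0n muln_gt0; apply/andP; split.
    by move: (ltn_ord j) => /= ?; lia.
  have := ltn_ord j; have := ltn_ord j0; move: nj => /eqP nj.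
  have : (nat_of_ord j <> nat_of_ord j0) by move=> /val_inj.
  lia.
have -> : Ncnt R i j0 j = (p * q)%:R * NB R n p q / (r * r.-1)%:R by rewrite -H mulfK.
by rewrite [X in X <= _](_ : _ = (p * q)%:R / (r * r.-1)%:R * NB R n p q * Kd * (e v (w (i, j)))%:R) //; ring.
Qed.

End PosBound.

Lemma le_Kmax (V : finType) (R : realFieldType) (K : V -> R) v : K v <= Kmax K.
Proof. by rewrite /Kmax (bigD1 v) //= le_max lexx. Qed.

Lemma Kmax_ge0 (V : finType) (R : realFieldType) (K : V -> R) : 0 <= Kmax K.
Proof. by rewrite /Kmax; elim/big_rec: _ => // v x _ H; rewrite le_max H orbT. Qed.

Section CondExp.
Variables (V : finType) (R : realFieldType) (n p q : nat) (e : rel V)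
  (f : V -> {set V} -> R) (K : V -> R).
Local Notation r := (p + q)%N.
Local Notation BT := {ffun 'I_n -> {set 'I_r}}.
Variable w : {ffun 'I_n * 'I_r -> V}.
Hypothesis winj : injective w.
Hypothesis cardV : #|V| = (r * n)%N.
Hypothesis irr : forall v, ~~ e v v.
Hypothesis lip : lipschitz e f K.
Hypothesis Kpos : forall v, 0 < K v.
Hypothesis degpos : forall v, (0 < deg e v)%N.
Hypotheses (n0 : (0 < n)%N) (p0 : (0 < p)%N) (q0 : (0 < q)%N).

Lemma sum_over_w (F : V -> R) : \sum_v F v = \sum_(x : 'I_n * 'I_r) F (w x).
Proof.
rewrite (reindex w) //; apply: onW_bij; apply: inj_card_bij => //.
by rewrite card_prod !card_ord cardV mulnC.
Qed.

Definition Yw : R := \sum_(x : 'I_n * 'I_r)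
   (\sum_j (e (w x) (w (x.1, j)))%:R) / (deg e (w x))%:R.

Lemma NB_card : (#|[pred B : BT | valid_B p B]|)%:R = NB R n p q.
Proof. by rewrite /NB sumr_const. Qed.

Lemma condExp_bound : `|condExp e f w| <= Kmax K / (n * r * r.-1)%:R * Yw.
Proof.
rewrite /condExp NB_card.
set S := \sum_(B | _) _.
have NB0 : 0 <= NB R n p q by rewrite /NB sumr_ge0.
have Z0 : 0 <= Kmax K / (n * r * r.-1)%:R * Yw.
  rewrite mulr_ge0 ?divr_ge0 ?Kmax_ge0 // /Yw sumr_ge0 // => x _.
  by rewrite divr_ge0 // sumr_ge0.
case: (eqVneq (NB R n p q) 0) => [->|NBn0]; first by rewrite invr0 mulr0 normr0.
have NBp : 0 < NB R n p q by rewrite lt_def NBn0.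
rewrite normrM normfV (ger0_norm NB0) ler_pdivrMr //.
have -> : S = (p * q * n)%:R^-1 * \sum_(x : 'I_n * 'I_r) \sum_(B : BT | valid_B p B)
     sigmaT R p q (T_of w B) (w x) * f (w x) (T_of w B :&: nbhd e (w x)).
  rewrite /S /xi -mulr_sumr exchange_big /= sum_over_w; congr (_ * _).
rewrite normrM ger0_norm ?invr_ge0 //.
apply: le_trans (ler_wpM2l _ (ler_norm_sum _ _ _)) _; first by rewrite invr_ge0.
apply: (@le_trans _ _ ((p * q * n)%:R^-1 * \sum_(x : 'I_n * 'I_r)
   ((p * q)%:R / (r * r.-1)%:R * NB R n p q * (K (w x) / (deg e (w x))%:R)
       * \sum_j (e (w x) (w (x.1, j)))%:R))).
  apply: ler_wpM2l; first by rewrite invr_ge0.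
  by apply: ler_sum => -[i j0] _; apply: pos_bound.
have -> : Kmax K / (n * r * r.-1)%:R * Yw * NB R n p q =
   Yw * (Kmax K / (n * r * r.-1)%:R * NB R n p q) by ring.
rewrite /Yw mulr_sumr mulr_suml; apply: ler_sum => x _.
set C := \sum_j _.
set d := (deg e (w x))%:R.
have pn : (p%:R : R) != 0 by rewrite pnatr_eq0 -lt0n.
have qn : (q%:R : R) != 0 by rewrite pnatr_eq0 -lt0n.
have nn : (n%:R : R) != 0 by rewrite pnatr_eq0 -lt0n.
have rn : ((p + q)%:R : R) != 0 by rewrite pnatr_eq0; lia.
have r1n : ((p + q).-1%:R : R) != 0 by rewrite pnatr_eq0; lia.
have -> : (p * q * n)%:R^-1 * ((p * q)%:R / (r * r.-1)%:R * NB R n p q * (K (w x) / d) * C)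
  = (C / d * (NB R n p q / (n * r * r.-1)%:R)) * K (w x).
  rewrite !natrM; field; rewrite ?pn ?qn ?nn ?r1n // -natrD rn /= pnatr_eq0 -lt0n degpos //.
have -> : C / d * (Kmax K / (n * r * r.-1)%:R * NB R n p q) =
  (C / d * (NB R n p q / (n * r * r.-1)%:R)) * Kmax K by ring.
apply: ler_wpM2l; last exact: le_Kmax.
rewrite mulr_ge0 ?divr_ge0 // /C sumr_ge0 //.
Qed.
End CondExp.

Section WSide.
Variables (V : finType) (R : realFieldType) (n p q : nat) (e : rel V).
Local Notation r := (p + q)%N.
Local Notation WT := {ffun 'I_n * 'I_r -> V}.
Hypothesis cardV : #|V| = (r * n)%N.

Definition sg (w : WT) v u := [exists x, (w x == v) && [exists j, w (x.1, j) == u]].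

Lemma sum_row (G : 'I_n * 'I_r -> R) i : \sum_y (if y.1 == i then G y else 0) = \sum_j G (i, j).
Proof.
transitivity (\sum_y (fun a b => if a == i then G (a, b) else 0) y.1 y.2).
  by apply: eq_bigr => -[a b].
rewrite -(pair_bigA _ (fun a b => if a == i then G (a, b) else 0)) /=.
rewrite (bigD1 i) //= eqxx [X in _ + X]big1 ?addr0 // => k /negbTE ->; exact: big1.
Qed.

Lemma sg_w (w : WT) : injective w -> forall x y, sg w (w x) (w y) = (y.1 == x.1).
Proof.
move=> winj x y; apply/existsP/eqP.
- by case=> x' /andP[/eqP /winj -> /existsP[j /eqP /winj <-]].
- move=> h; exists x; rewrite eqxx /=; apply/existsP; exists y.2.
  by rewrite -h -surjective_pairing.
Qed.

Lemma sum_sg (w : WT) : injective w -> forall x (G : V -> R),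
  \sum_u (if sg w (w x) u then G u else 0) = \sum_j G (w (x.1, j)).
Proof.
move=> winj x G; rewrite (sum_over_w winj cardV).
rewrite -(sum_row (fun y => G (w y))); apply: eq_bigr => y _; by rewrite sg_w.
Qed.

Lemma Yw_eq (w : WT) : injective w ->
  Yw R e w = \sum_v \sum_u ((sg w v u && e v u)%:R / (deg e v)%:R).
Proof.
move=> winj; rewrite (sum_over_w winj cardV) /Yw; apply: eq_bigr => x _.
rewrite -mulr_suml; congr (_ / _).
rewrite -(sum_sg winj x (fun u => (e (w x) u)%:R)); apply: eq_bigr => u _.
by case: (sg _ _ _).
Qed.

Variable Pi : {set {set V}}.
Hypothesis partPi : partition Pi [set: V].
Hypothesis divPi : forall B, B \in Pi -> (r %| #|B|)%N.

Local Notation valid := (@valid_labelling V n r Pi).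

Lemma covT : cover Pi = [set: V].
Proof. by case/and3P: partPi => /eqP. Qed.
Lemma tI : trivIset Pi.
Proof. by case/and3P: partPi. Qed.
Lemma no0 : set0 \notin Pi.
Proof. by case/and3P: partPi. Qed.

Lemma pb_mem v : pblock Pi v \in Pi.
Proof. by apply: pblock_mem; rewrite covT inE. Qed.
Lemma pb_self v : v \in pblock Pi v.
Proof. by rewrite mem_pblock covT inE. Qed.
Lemma blk_eq B v : B \in Pi -> v \in B -> B = pblock Pi v.
Proof. by move=> BP vB; rewrite (def_pblock tI BP vB). Qed.

Lemma valid_inj (w : WT) : valid w -> injective w.
Proof. by case/andP => /injectiveP. Qed.

Lemma valid_blk (w : WT) i : valid w -> exists2 B, B \in Pi & forall j, w (i, j) \in B.
Proof.
case/andP => _ /forallP /(_ i) /existsP[B /andP[BP /forallP H]].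
by exists B.
Qed.

Lemma sg_blk (w : WT) v u : valid w -> sg w v u -> u \in pblock Pi v.
Proof.
move=> vw /existsP[x /andP[/eqP wx /existsP[j /eqP wu]]].
have [B BP HB] := valid_blk x.1 vw.
have : w x \in B by rewrite [x]surjective_pairing HB.
rewrite wx => vB; rewrite -(blk_eq BP vB) -wu; exact: HB.
Qed.

Definition hsw (u u' : V) (w : WT) : WT := [ffun x => tperm u u' (w x)].

Lemma hswK u u' w : hsw u u' (hsw u u' w) = w.
Proof. by apply/ffunP => x; rewrite !ffunE tpermK. Qed.

Lemma hsw_valid u u' w : u' \in pblock Pi u -> valid w -> valid (hsw u u' w).
Proof.
move=> uu' vw; apply/andP; split.
  apply/injectiveP => x y; rewrite !ffunE => /perm_inj; exact: valid_inj.
apply/forallP => i; have [B BP HB] := valid_blk i vw.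
apply/existsP; exists B; rewrite BP /=; apply/forallP => j; rewrite ffunE.
case: tpermP => [E|E|_ _]; last exact: HB.
- have := HB j; rewrite E => uB; by rewrite (blk_eq BP uB).
- have := HB j; rewrite E => u'B; rewrite (blk_eq BP u'B).
  by rewrite -(blk_eq (pb_mem u) uu') pb_self.
Qed.

Lemma tperm_eqE (u u' a b : V) : (tperm u u' a == b) = (a == tperm u u' b).
Proof. by rewrite -{1}(tpermK u u' b) (inj_eq (@perm_inj _ _)). Qed.

Lemma sg_hsw u u' w v : u != v -> u' != v -> sg (hsw u u' w) v u' = sg w v u.
Proof.
move=> uv u'v; rewrite /sg; apply: eq_existsb => x; rewrite !ffunE tperm_eqE (tpermD uv u'v).
congr andb; apply: eq_existsb => j; by rewrite ffunE tperm_eqE tpermR.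
Qed.

Definition cnt v u : R := \sum_(w : WT | valid w) (sg w v u)%:R.
Definition NW : R := \sum_(w : WT | valid w) 1.

Lemma cnt_sym v u u' : u' \in pblock Pi u -> u != v -> u' != v -> cnt v u = cnt v u'.
Proof.
move=> uu' uv u'v; rewrite /cnt.
rewrite -(@sum_bij R WT (fun w => valid w) (fun w => valid w) (hsw u u') (hsw u u') (fun w => (sg w v u')%:R)).
- by apply: eq_bigr => w _; rewrite sg_hsw.
- by move=> w; apply: hsw_valid.
- by move=> w; apply: hsw_valid.
- by move=> w _; apply: hswK.
- by move=> w _; apply: hswK.
Qed.

Lemma cnt_out v u : u \notin pblock Pi v -> cnt v u = 0.
Proof.
move=> uP; rewrite /cnt big1 // => w vw; case E: (sg w v u) => //.
by move: uP; rewrite (sg_blk vw E).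
Qed.

Lemma row_count (w : WT) v : valid w ->
  \sum_u (sg w v u && (u != v))%:R = r.-1%:R :> R.
Proof.
move=> vw; have winj := valid_inj vw.
have [g wg gw] : bijective w.
  by apply: inj_card_bij => //; rewrite card_prod !card_ord cardV mulnC.
rewrite -(gw v); set x0 := g v.
transitivity (\sum_u (if sg w (w x0) u then (u != w x0)%:R else 0 : R)).
  by apply: eq_bigr => u _; case: sg.
rewrite sum_sg //.
under eq_bigr => j _ do rewrite (inj_eq winj) {2}[x0]surjective_pairing xpair_eqE eqxx /=.
rewrite (bigD1 x0.2) //= eqxx add0r.
rewrite (eq_bigr (fun _ => 1)); last by move=> j ->.
by rewrite sumr_const cardC1 card_ord.
Qed.

Lemma cnt_sum v : \sum_(u | u != v) cnt v u = NW * r.-1%:R.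
Proof.
rewrite /cnt exchange_big /NW mulr_suml; apply: eq_bigr => w vw.
rewrite mul1r -(row_count v vw) big_mkcond; apply: eq_bigr => u _.
by case: (u != v); rewrite ?andbT ?andbF.
Qed.

Lemma cnt_val v u : u \in pblock Pi v -> u != v ->
  cnt v u * (#|pblock Pi v|.-1)%:R = NW * r.-1%:R.
Proof.
move=> uP uv; rewrite -(cnt_sum v).
rewrite (bigID (fun u' => u' \in pblock Pi v)) /= [X in _ = _ + X]big1 ?addr0; last first.
  by move=> u' /andP[_ /cnt_out].
rewrite (eq_bigr (fun _ => cnt v u)); last first.
  move=> u' /andP[u'v u'P]; apply: cnt_sym => //.
  by rewrite -(blk_eq (pb_mem v) u'P).
rewrite sumr_const mulr_natr; congr (_ *+ _).
rewrite (cardsD1 v) pb_self add1n /=; apply: eq_card => x; rewrite !inE.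
by [].
Qed.

Hypothesis irr : forall v, ~~ e v v.
Hypothesis degpos : forall v, (0 < deg e v)%N.
Hypotheses (p0 : (0 < p)%N) (q0 : (0 < q)%N).

Lemma blk_card P : P \in Pi -> (2 <= #|P|)%N.
Proof.
move=> PP; have : (0 < #|P|)%N.
  rewrite card_gt0; apply: contraNneq no0 => <-; exact: PP.
move=> /(dvdn_leq) /(_ (divPi PP)); lia.
Qed.

Lemma NW_ge0 : 0 <= NW.
Proof. exact: sumr_ge0. Qed.

Lemma sum_e v : \sum_u (e v u)%:R = (deg e v)%:R :> R.
Proof.
transitivity (\sum_u (if e v u then 1 else 0 : R)).
  by apply: eq_bigr => u _; case: (e v u).
rewrite -big_mkcond /= sumr_const /deg /nbhd; congr (_ *+ _).
by apply: eq_card => u; rewrite !inE.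
Qed.

Lemma v_bound v : \sum_u (e v u)%:R * cnt v u / (deg e v)%:R
   <= NW * r.-1%:R / (#|pblock Pi v|.-1)%:R.
Proof.
set X := NW * r.-1%:R / (#|pblock Pi v|.-1)%:R.
have X0 : 0 <= X by rewrite divr_ge0 // mulr_ge0 // NW_ge0.
have cP : (#|pblock Pi v|.-1)%:R != 0 :> R.
  by rewrite pnatr_eq0; have := blk_card (pb_mem v); lia.
apply: (@le_trans _ _ (\sum_u (e v u)%:R * X / (deg e v)%:R)).
  apply: ler_sum => u _; apply: ler_wpM2r; first by rewrite invr_ge0.
  case E: (e v u); rewrite ?mul0r // !mul1r.
  have uv : u != v by apply: contraTneq E => ->; rewrite (negbTE (irr v)).
  case: (boolP (u \in pblock Pi v)) => uP; last by rewrite cnt_out.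
  rewrite /X -(cnt_val uP uv) mulfK //.
rewrite -mulr_suml -mulr_suml sum_e mulrAC divff ?mul1r // pnatr_eq0 -lt0n degpos //.
Qed.

Lemma blk_sum : \sum_v ((#|pblock Pi v|.-1)%:R : R)^-1 <= 2 * (#|Pi|)%:R.
Proof.
have -> : \sum_v ((#|pblock Pi v|.-1)%:R : R)^-1 = \sum_(v in cover Pi) ((#|pblock Pi v|.-1)%:R : R)^-1.
  by apply: eq_bigl => v; rewrite covT inE.
rewrite (big_trivIset _ tI) /= mulr_natr -sumr_const.
apply: ler_sum => P PP.
rewrite (eq_bigr (fun _ => ((#|P|.-1)%:R : R)^-1)); last first.
  by move=> v vP; rewrite -(blk_eq PP vP).
rewrite sumr_const (_ : _ *+ #|P| = #|P|%:R / (#|P|.-1)%:R); last by rewrite mulr_natl.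
have c2 := blk_card PP.
rewrite ler_pdivrMr ?ltr0n; last lia.
rewrite -natrM ler_nat; lia.
Qed.

Lemma claimB : \sum_(w : WT | valid w) Yw R e w <= NW * r.-1%:R * (2 * (#|Pi|)%:R).
Proof.
rewrite (eq_bigr (fun w => \sum_v \sum_u ((sg w v u && e v u)%:R / (deg e v)%:R))); last first.
  by move=> w vw; apply: Yw_eq; exact: valid_inj.
rewrite exchange_big /=.
apply: (@le_trans _ _ (\sum_v NW * r.-1%:R / (#|pblock Pi v|.-1)%:R)).
  apply: ler_sum => v _; rewrite exchange_big /=.
  have -> : \sum_u \sum_(w : WT | valid w) (sg w v u && e v u)%:R / (deg e v)%:R
      = \sum_u (e v u)%:R * cnt v u / (deg e v)%:R.
    apply: eq_bigr => u _; rewrite /cnt mulr_sumr mulr_suml; apply: eq_bigr => w _.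
    by case: (e v u); case: (sg w v u); rewrite /= ?mul1r ?mul0r ?mulr0.
  exact: v_bound.
rewrite -mulr_sumr; apply: ler_wpM2l; last exact: blk_sum.
by rewrite mulr_ge0 // NW_ge0.
Qed.

End WSide.
Unset Implicit Arguments.

Theorem mainTheorem17 (R : realFieldType) (V : finType) (n p q : nat)
    (e : rel V) (f : V -> {set V} -> R) (K : V -> R) (Pi : {set {set V}}) :
  (0 < n)%N -> (0 < p)%N -> (0 < q)%N ->
  #|V| = ((p + q) * n)%N ->
  simple_graph e ->
  (forall v, (0 < deg e v)%N) ->
  (forall v, f v set0 = 0) ->
  (forall v, 0 < K v) ->
  lipschitz e f K ->
  partition Pi [set: V] ->
  (forall B, B \in Pi -> (p + q %| #|B|)%N) ->
  @meanSq V R p q n e f Pi <=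
    2 * Kmax K ^+ 2 * (#|Pi|)%:R / (n * (p + q) * dmin e)%:R.
Proof.
move=> n0 p0 q0 cardV [_ irr] degpos _ Kpos lip partPi divPi.
set r := (p + q)%N.
have dmin_le : forall v, (dmin e <= deg e v)%N.
  move=> v; rewrite /dmin; have : v \in index_enum V by rewrite mem_index_enum.
  elim: (index_enum V) => //= a s IH; rewrite inE big_cons => /orP[/eqP ->|/IH H].
    exact: geq_minl.
  exact: leq_trans (geq_minr _ _) H.
have dmin_gt0 : (0 < dmin e)%N.
  rewrite /dmin; apply: (big_ind (fun m => 0 < m)%N) => //.
  - by rewrite cardV muln_gt0 n0 addn_gt0 p0.
  - by move=> x y; rewrite leq_min => -> ->.
set D := ((dmin e)%:R : R).
have Dp : 0 < D by rewrite ltr0n.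
set N := ((n * r * r.-1)%:R : R).
have Np : 0 < N by rewrite ltr0n !muln_gt0 n0 /r; apply/andP; split; lia.
set M := (r * n)%:R * r.-1%:R / D.
have Ybound : forall w : {ffun 'I_n * 'I_r -> V}, 0 <= Yw R e w <= M.
  move=> w; apply/andP; split.
    rewrite /Yw sumr_ge0 // => x _; by rewrite divr_ge0 // sumr_ge0.
  rewrite /Yw /M (_ : (r * n)%:R * r.-1%:R / D = \sum_(x : 'I_n * 'I_r) r.-1%:R / D); last first.
    rewrite sumr_const card_prod !card_ord.
    have -> : r.-1%:R / D *+ (n * r) = (n * r)%:R * (r.-1%:R / D) by rewrite (mulr_natl (r.-1%:R / D) (n * r)).
    by rewrite mulnC mulrA.
  apply: ler_sum => x _; apply: ler_pM => //; first by rewrite sumr_ge0.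
  - by rewrite invr_ge0.
  - rewrite (bigD1 x.2) //= -surjective_pairing (negbTE (irr _)) add0r.
    apply: (@le_trans _ _ (\sum_(j | j != x.2) 1)).
      by apply: ler_sum => j _; case: (e _ _).
    by rewrite sumr_const cardC1 card_ord.
  - rewrite lef_pV2 ?posrE ?ltr0n ?ler_nat //; exact: (leq_trans dmin_gt0).
rewrite /meanSq.
have -> : (#|[pred w : {ffun 'I_n * 'I_r -> V} | valid_labelling Pi w]|)%:R = NW R n p q Pi
  by rewrite /NW sumr_const.
have NW0 : 0 <= NW R n p q Pi by rewrite /NW sumr_ge0.
have RHS0 : 0 <= 2 * Kmax K ^+ 2 * (#|Pi|)%:R / (n * r * dmin e)%:R.
  by rewrite divr_ge0 // !mulr_ge0 // ?sqr_ge0 // Kmax_ge0.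
case: (eqVneq (NW R n p q Pi) 0) => [->|NWn0]; first by rewrite invr0 mulr0.
have NWp : 0 < NW R n p q Pi by rewrite lt_def NWn0.
rewrite ler_pdivrMr //.
set A := (Kmax K / N) ^+ 2 * M.
apply: (@le_trans _ _ (\sum_(w : {ffun 'I_n * 'I_r -> V} | valid_labelling Pi w) A * Yw R e w)).
  apply: ler_sum => w vw.
  have cb := condExp_bound (valid_inj vw) cardV irr lip Kpos degpos n0 p0 q0.
  have e2 : condExp e f w ^+ 2 = `|condExp e f w| * `|condExp e f w|.
    by rewrite -normrM -expr2 ger0_norm // sqr_ge0.
  rewrite e2; apply: le_trans (ler_pM (normr_ge0 _) (normr_ge0 _) cb cb) _.
  have /andP[Y0 YM] := Ybound w.
  rewrite /A -/N.
  have -> : Kmax K / N * Yw R e w * (Kmax K / N * Yw R e w) =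
            (Kmax K / N) ^+ 2 * (Yw R e w * Yw R e w) by ring.
  rewrite -mulrA; apply: ler_wpM2l; first exact: sqr_ge0.
  by apply: ler_wpM2r.
rewrite -mulr_sumr.
have A0 : 0 <= A by rewrite /A /M mulr_ge0 ?sqr_ge0 // divr_ge0 ?mulr_ge0 // ltW.
apply: le_trans (ler_wpM2l A0 (claimB R cardV partPi divPi irr degpos p0 q0)) _.
rewrite le_eqVlt; apply/orP; left; apply/eqP.
have Dn : D != 0 by rewrite gt_eqF.
have Nn : N != 0 by rewrite gt_eqF.
rewrite /A /M /N /D !natrM.
have nn : (n%:R : R) != 0 by rewrite pnatr_eq0 -lt0n.
have rn : (r%:R : R) != 0 by rewrite pnatr_eq0 /r; lia.
have r1n : (r.-1%:R : R) != 0 by rewrite pnatr_eq0 /r; lia.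
move: Dn Nn; rewrite /D /N !natrM => Dn Nn.
field; rewrite nn rn r1n andbT pnatr_eq0 -lt0n dmin_gt0 //.
Qed.
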